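(* Let $G_1$ and $G_2$ be two vertex-disjoint simple connected graphs with $|V(G_1)|=n_1$, $|V(G_2)|=n_2$, $|E(G_1)|=m_1$, $|E(G_2)|=m_2$. Then the edge Q-join $G_1\underline{\vee}_Q G_2$ satisfies \[ F(G_1\underline{\vee}_Q G_2)=F(G_1)+F(G_2)+3n_2^{2}M_1(G_1)+3m_1M_1(G_2)+M_4(G_1)+3n_2\,HM(G_1)+3\,ReZM(G_1)+m_1^{2}(6m_2+m_1n_2)+m_1n_2^{3}. \]
   Context: For a simple graph $G$ and $v\in V(G)$, $d_G(v)$ is the degree of $v$. Define $M_1(G)=\sum_{v\in V(G)}d_G(v)^2$, $F(G)=\sum_{v\in V(G)}d_G(v)^3$, $M_4(G)=\sum_{v\in V(G)}d_G(v)^4$, $HM(G)=\sum_{uv\in E(G)}[d_G(u)+d_G(v)]^2$, and $ReZM(G)=\sum_{uv\in E(G)}d_G(u)d_G(v)\,[d_G(u)+d_G(v)]$. The graph $Q(G)$ is obtained from $G$ by inserting a new vertex into each edge of $G$ (subdividing it) and then joining by an edge each pair of new vertices that lie on adjacent edges of $G$ (edges sharing an end vertex); let $I(G)$ denote the set of these new vertices, so $V(Q(G))=V(G)\cup I(G)$. The edge Q-join $G_1\underline{\vee}_Q G_2$ is the graph obtained from $Q(G_1)$ and $G_2$ (taken vertex-disjoint) by joining each vertex of $I(G_1)$ to every vertex of $G_2$ by an edge. *)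

(* Defs.v *)
From mathcomp Require Import all_boot.
Set Implicit Arguments. Unset Strict Implicit. Unset Printing Implicit Defensive.

(* A simple graph: a symmetric irreflexive relation r on a finite vertex type V. *)

Definition deg (V : finType) (r : rel V) (v : V) : nat := #|[set w | r v w]|.

Definition is_edge (V : finType) (r : rel V) (e : {set V}) : bool :=
  [exists x, [exists y, r x y && (e == [set x; y])]].

Definition edge_type (V : finType) (r : rel V) := {e : {set V} | is_edge r e}.

Definition nverts (V : finType) (r : rel V) : nat := #|V|.
Definition nedges (V : finType) (r : rel V) : nat := #|{: edge_type r}|.

Definition M1 (V : finType) (r : rel V) : nat := \sum_(v : V) deg r v ^ 2.
Definition Fidx (V : finType) (r : rel V) : nat := \sum_(v : V) deg r v ^ 3.
Definition M4 (V : finType) (r : rel V) : nat := \sum_(v : V) deg r v ^ 4.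
(* for an edge e = {u,v}: sum over x in e of deg x = d(u)+d(v),
   product over x in e of deg x = d(u) d(v) *)
Definition HM (V : finType) (r : rel V) : nat :=
  \sum_(e : edge_type r) (\sum_(x in val e) deg r x) ^ 2.
Definition ReZM (V : finType) (r : rel V) : nat :=
  \sum_(e : edge_type r) (\prod_(x in val e) deg r x) * (\sum_(x in val e) deg r x).

(* The edge Q-join of (V1,r1) and (V2,r2): vertex set V(G1) + I(G1) + V(G2),
   where I(G1) is represented by the edges of G1. *)
Definition qjoin_vert (V1 V2 : finType) (r1 : rel V1) : finType :=
  ((V1 + edge_type r1) + V2)%type.

Definition qjoin_adj (V1 V2 : finType) (r1 : rel V1) (r2 : rel V2) :
  rel (qjoin_vert V2 r1) := fun a b =>
  match a, b with
  | inl (inl u), inl (inr e) => u \in val e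
  | inl (inr e), inl (inl u) => u \in val e
  | inl (inr e), inl (inr f) => (e != f) && (val e :&: val f != set0)
  | inl (inr _), inr _ => true
  | inr _, inl (inr _) => true
  | inr w, inr w' => r2 w w'
  | _, _ => false
  end.

Definition connected (V : finType) (r : rel V) : Prop := forall x y : V, connect r x y.
Arguments qjoin_adj [V1 V2] r1 r2 _ _.

(* Main.v *)
Require Import Defs.
From mathcomp Require Import all_boot.
From mathcomp Require Import ssralg.
From mathcomp Require Import ring.
Section Helpers.
Set Implicit Arguments. Unset Strict Implicit.

Lemma card_setb (T : finType) (P : pred T) : #|[set x | P x]| = \sum_(x : T) (P x : nat).
Proof.
rewrite -sum1_card (big_mkcond (fun x => x \in [set x | P x])) /=.
by apply: eq_bigr => x _; rewrite inE; case: (P x).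
Qed.

Lemma edge_two (V : finType) (r : rel V) (irr : irreflexive r) (e : edge_type r) :
  exists a b, [/\ a != b, r a b & val e = [set a; b]].
Proof.
case: e => E /= /existsP [a /existsP [b /andP [rab /eqP ->]]].
exists a, b; split => //; apply/eqP => ab; by rewrite ab irr in rab.
Qed.

Lemma two_in (V : finType) (r : rel V) (irr : irreflexive r) (e : edge_type r) a b :
  a != b -> a \in val e -> b \in val e -> val e = [set a; b].
Proof.
move=> ab ha hb; have [x [y [xy _ E]]] := edge_two irr e.
apply/eqP; rewrite eq_sym eqEcard {2}E !cards2 xy ab andbT.
by apply/subsetP => z; rewrite !inE => /orP [] /eqP ->.
Qed.

Definition nedg (V : finType) (r : rel V) (u : V) := \sum_(e : edge_type r) (u \in val e : nat).

Lemma ne_deg (V : finType) (r : rel V) (sym : symmetric r) (irr : irreflexive r) u :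
  nedg r u = deg r u.
Proof.
rewrite /nedg /deg -card_setb.
have -> : #|[set e : edge_type r | u \in val e]| =
          #|val @: [set e : edge_type r | u \in val e]|.
  by rewrite card_imset //; apply: val_inj.
have -> : #|[set w | r u w]| = #|(fun w => [set u; w]) @: [set w | r u w]|.
  rewrite card_in_imset // => w w'; rewrite !inE => hw hw' H; 
  have := congr1 (fun S : {set V} => w' \in S) H; rewrite !inE eqxx orbT => /orP [/eqP E|/eqP -> //].
  by rewrite E irr in hw'.
apply: eq_card => E; apply/imsetP/imsetP.
- case=> e; rewrite inE => ue ->.
  have [x [y [xy rxy Ee]]] := edge_two irr e.
  move: ue; rewrite Ee !inE => /orP [] /eqP ->.
  + by exists y; rewrite ?inE.
  + by exists x; [rewrite inE sym | rewrite setUC].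
- case=> w; rewrite inE => uw ->.
  have ie : is_edge r [set u; w] by apply/existsP; exists u; apply/existsP; exists w; rewrite uw eqxx.
  by exists (exist (fun S => is_edge r S) _ ie); rewrite // inE /= !inE eqxx.
Qed.

Lemma handshake (V : finType) (r : rel V) (sym : symmetric r) (irr : irreflexive r) (g : V -> nat) :
  \sum_(e : edge_type r) \sum_(x in val e) g x = \sum_x g x * deg r x.
Proof.
transitivity (\sum_(e : edge_type r) \sum_x (x \in val e : nat) * g x).
  apply: eq_bigr => e _; rewrite (big_mkcond (fun x => x \in val e)).
  by apply: eq_bigr => x _; case: (x \in val e); rewrite ?mul1n ?mul0n.
rewrite exchange_big; apply: eq_bigr => x _.
by rewrite -big_distrl /= -/(nedg r x) ne_deg // mulnC.
Qed.

Lemma sum_set2 (V : finType) (g : V -> nat) a b : a != b ->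
  \sum_(x in [set a; b]) g x = g a + g b.
Proof. by move=> ab; rewrite big_setU1 ?big_set1 // inE. Qed.

Lemma deg_qv (V1 V2 : finType) (r1 : rel V1) (r2 : rel V2)
  (sym1 : symmetric r1) (irr1 : irreflexive r1) u :
  deg (qjoin_adj r1 r2) (inl (inl u)) = deg r1 u.
Proof.
rewrite /deg card_setb !big_sumType /= -/(deg r1 u) -ne_deg //.
by rewrite big1 // add0n [X in _ + X]big1 // addn0.
Qed.

Lemma deg_qw (V1 V2 : finType) (r1 : rel V1) (r2 : rel V2) w :
  deg (qjoin_adj r1 r2) (inr w) = deg r2 w + nedges r1.
Proof.
rewrite /deg card_setb !big_sumType /= card_setb big1 // add0n sum_nat_const muln1 addnC.
by [].
Qed.

Lemma pointwise (V : finType) (r : rel V) (irr : irreflexive r) (e f : edge_type r) a b :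
  a != b -> val e = [set a; b] ->
  (a \in val f) + (b \in val f) = 2 * (f == e) + ((e != f) && (val e :&: val f != set0)).
Proof.
move=> ab Ee; case: (eqVneq f e) => [->|fe].
  by rewrite Ee !inE !eqxx orbT.
rewrite /= muln0 add0n.
have -> : (val e :&: val f != set0) = (a \in val f) || (b \in val f).
  apply/set0Pn/orP => [[z]|[h|h]].
  - by rewrite inE Ee !inE => /andP [/orP [] /eqP -> h]; [left|right].
  - by exists a; rewrite inE Ee !inE eqxx h.
  - by exists b; rewrite inE Ee !inE eqxx h orbT.
case ha: (a \in val f); case hb: (b \in val f) => //=.
by case/eqP: fe; apply: val_inj; rewrite Ee; apply: two_in.
Qed.

Lemma deg_qe (V1 V2 : finType) (r1 : rel V1) (r2 : rel V2)
  (sym1 : symmetric r1) (irr1 : irreflexive r1) e :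
  deg (qjoin_adj r1 r2) (inl (inr e)) = \sum_(x in val e) deg r1 x + #|V2|.
Proof.
have [a [b [ab rab Ee]]] := edge_two irr1 e.
rewrite [LHS]/deg card_setb !big_sumType /= sum_nat_const muln1.
have -> : \sum_(i : V1) (i \in val e : nat) = 2.
  rewrite Ee (bigD1 a) ?inE ?eqxx //= (bigD1 b); last by rewrite eq_sym.
  rewrite !inE eqxx orbT big1 //= => i /andP [ia ib]; rewrite !inE.
  by case: (i == a) ia; case: (i == b) ib.
congr (_ + _).
have Hs : \sum_(x in val e) deg r1 x = deg r1 a + deg r1 b by rewrite Ee sum_set2.
have H2 : \sum_(f : edge_type r1) 2 * (f == e) = 2.
  by rewrite (bigD1 e) //= eqxx big1 // => f /negbTE ->.
rewrite Hs -!ne_deg // /nedg -big_split /=.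
by rewrite (eq_bigr _ (fun f _ => @pointwise _ _ irr1 e f a b ab Ee)) big_split /= H2.
Qed.

Lemma per_edge (V : finType) (r : rel V) (irr : irreflexive r) (e : edge_type r) :
  (\sum_(x in val e) deg r x) ^ 3 =
  \sum_(x in val e) deg r x ^ 3 + 3 * ((\prod_(x in val e) deg r x) * \sum_(x in val e) deg r x).
Proof.
have [a [b [ab rab ->]]] := edge_two irr e.
rewrite !sum_set2 // big_setU1 ?big_set1 ?inE //=.
by set x := deg r a; set y := deg r b; ring.
Qed.

Lemma size_edge (V : finType) (r : rel V) (irr : irreflexive r) (e : edge_type r) :
  \sum_(x in val e) 1 = 2.
Proof. by have [a [b [ab rab ->]]] := edge_two irr e; rewrite sum_set2. Qed.

End Helpers.

Theorem theorem6 (V1 V2 : finType) (r1 : rel V1) (r2 : rel V2)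
  (sym1 : symmetric r1) (irr1 : irreflexive r1)
  (sym2 : symmetric r2) (irr2 : irreflexive r2)
  (conn1 : connected r1) (conn2 : connected r2) :
  let n1 := nverts r1 in let n2 := nverts r2 in
  let m1 := nedges r1 in let m2 := nedges r2 in
  Fidx (qjoin_adj r1 r2) =
    Fidx r1 + Fidx r2 + 3 * n2 ^ 2 * M1 r1 + 3 * m1 * M1 r2 + M4 r1
    + 3 * n2 * HM r1 + 3 * ReZM r1 + m1 ^ 2 * (6 * m2 + m1 * n2) + m1 * n2 ^ 3.
Proof.
move=> n1 n2 m1 m2.
rewrite /Fidx !big_sumType /=.
rewrite (eq_bigr (fun u => deg r1 u ^ 3)); last by move=> u _; rewrite deg_qv.
rewrite (eq_bigr (fun e : edge_type r1 => (\sum_(x in val e) deg r1 x + n2) ^ 3)); last by move=> e _; rewrite deg_qe.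
rewrite (eq_bigr (fun w : V2 => (deg r2 w + m1) ^ 3)); last by move=> w _; rewrite deg_qw.
have hA : \sum_(e : edge_type r1) (\sum_(x in val e) deg r1 x + n2) ^ 3 =
   \sum_(e : edge_type r1) \sum_(x in val e) deg r1 x ^ 3 + 3 * ReZM r1 + 3 * n2 * HM r1
   + 3 * n2 ^ 2 * \sum_(e : edge_type r1) \sum_(x in val e) deg r1 x + \sum_(e : edge_type r1) n2 ^ 3.
  rewrite /ReZM /HM !big_distrr -!big_split /=; apply: eq_bigr => e _.
  rewrite (_ : (\sum_(x in val e) deg r1 x + n2) ^ 3 = (\sum_(x in val e) deg r1 x) ^ 3
     + 3 * n2 * (\sum_(x in val e) deg r1 x) ^ 2 + 3 * n2 ^ 2 * (\sum_(x in val e) deg r1 x) + n2 ^ 3);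
    last by set s := \sum_(x in val e) deg r1 x; ring.
  rewrite per_edge //; ring.
have h4 : \sum_(e : edge_type r1) \sum_(x in val e) deg r1 x ^ 3 = M4 r1.
  by rewrite handshake //; apply: eq_bigr => x _; rewrite -expnSr.
have h1 : \sum_(e : edge_type r1) \sum_(x in val e) deg r1 x = M1 r1.
  by rewrite handshake //; apply: eq_bigr => x _; rewrite mulnn.
have hc : \sum_(e : edge_type r1) n2 ^ 3 = m1 * n2 ^ 3 by rewrite sum_nat_const.
have hB : \sum_(w : V2) (deg r2 w + m1) ^ 3 =
   Fidx r2 + 3 * m1 * M1 r2 + 3 * m1 ^ 2 * \sum_(w : V2) deg r2 w + n2 * m1 ^ 3.
  rewrite /Fidx /M1 !big_distrr /= (_ : n2 * m1 ^ 3 = \sum_(w : V2) m1 ^ 3); last by rewrite sum_nat_const.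
  rewrite -!big_split /=; apply: eq_bigr => w _; ring.
have hD : \sum_(w : V2) deg r2 w = 2 * m2.
  transitivity (\sum_(x : V2) 1 * deg r2 x); first by apply: eq_bigr => x _; rewrite mul1n.
  rewrite -(handshake sym2 irr2 (fun _ => 1)).
  rewrite (eq_bigr (fun _ => 2)); first by rewrite sum_nat_const mulnC.
  by move=> e _; exact: size_edge.
rewrite hA h4 h1 hc hB hD.
rewrite /Fidx; ring.
Qed.
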